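(* Let $G=PL_\delta(\mathbb{R}_{+})$ and $H=\{f\in G : \lim_{x\to\infty} f(x)/x = 1\}$. Then the center of the quotient group $G/H$ is trivial.
   Context: A homeomorphism $f$ of $[0,\infty)$ is piecewise linear if its set $B(f)$ of breakpoints (points where $f$ is not differentiable) is discrete and $f$ is affine on each complementary interval. Its set of slopes is $\Lambda(f)=\{f'(t): t\notin B(f)\}$; $\Lambda(f)$ is bounded if there is $K>1$ with $K^{-1}<|\lambda|<K$ for all $\lambda\in\Lambda(f)$. $PL_\delta(\mathbb{R}_{+})$ denotes the group (under composition) of piecewise-linear homeomorphisms of $[0,\infty)$ with bounded set of slopes. $H$ is a normal subgroup of $G$. *)

(* Defs.v *)
From Stdlib Require Import Reals.
Open Scope R_scope.

(* Functions are R -> R; only their values on [0, +oo) matter. *)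

Definition cont_on_halfline (f : R -> R) : Prop :=
  forall x, 0 <= x -> forall eps, 0 < eps -> exists delta, 0 < delta /\
    forall y, 0 <= y -> Rabs (y - x) < delta -> Rabs (f y - f x) < eps.

Definition inv_on (f h : R -> R) : Prop :=
  (forall x, 0 <= x -> 0 <= h x) /\
  (forall x, 0 <= x -> h (f x) = x) /\
  (forall y, 0 <= y -> f (h y) = y).

Definition homeo_halfline (f : R -> R) : Prop :=
  (forall x, 0 <= x -> 0 <= f x) /\ cont_on_halfline f /\
  exists h, inv_on f h /\ cont_on_halfline h.

(* f is piecewise linear on [0,+oo) with a discrete (locally finite) set of
   breakpoints, and its set of slopes is bounded: there is a partition
   0 = x_0 < x_1 < ... -> +oo such that f is affine with slope a_n on each
   [x_n, x_{n+1}], and K^-1 < |a_n| < K for some K > 1. *)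
Definition PL_bounded (f : R -> R) : Prop :=
  exists (x a b : nat -> R),
    x 0%nat = 0 /\
    (forall n, x n < x (S n)) /\
    (forall M, exists n, M < x n) /\
    (forall n t, x n <= t <= x (S n) -> f t = a n * t + b n) /\
    exists K, 1 < K /\ forall n, / K < Rabs (a n) < K.

Definition in_G (f : R -> R) : Prop := homeo_halfline f /\ PL_bounded f.

Definition ratio_tends_to_1 (h : R -> R) : Prop :=
  forall eps, 0 < eps -> exists M, forall x, M <= x -> 0 < x ->
    Rabs (h x / x - 1) < eps.

Definition in_H (f : R -> R) : Prop := in_G f /\ ratio_tends_to_1 f.

(* Main.v *)
Require Import Defs.
From Stdlib Require Import Reals Lra Lia Psatz Classical ClassicalEpsilon.
Open Scope R_scope.

Definition PLdata (F : R -> R) (x a b : nat -> R) : Prop :=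
  x 0%nat = 0 /\ (forall n, x n < x (S n)) /\ (forall M, exists n, M < x n) /\
  (forall n t, x n <= t <= x (S n) -> F t = a n * t + b n).

Lemma x_lt (x : nat -> R) : (forall n, x n < x (S n)) ->
  forall n m, (n < m)%nat -> x n < x m.
Proof.
  intros Hi n m; induction m; intros H; [lia|].
  destruct (Nat.eq_dec n m) as [->|Hne]; [apply Hi|].
  apply Rlt_trans with (x m); [apply IHm; lia| apply Hi].
Qed.

Lemma x_le (x : nat -> R) : (forall n, x n < x (S n)) ->
  forall n m, (n <= m)%nat -> x n <= x m.
Proof.
  intros Hi n m H. destruct (Nat.eq_dec n m) as [->|Hne]; [lra|].
  left; apply x_lt; auto; lia.
Qed.

Lemma x_nonneg (x : nat -> R) : x 0%nat = 0 -> (forall n, x n < x (S n)) ->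
  forall n, 0 <= x n.
Proof. intros H0 Hi n. rewrite <- H0. apply x_le; auto; lia. Qed.

Lemma bilip F x a b K : PLdata F x a b -> 0 < K -> (forall n, / K < a n < K) ->
  forall s t, 0 <= s -> s <= t -> (t - s) / K <= F t - F s <= K * (t - s).
Proof.
  intros [H0 [Hi [Hu Hp]]] HK Ha.
  assert (Hn : forall n s t, 0 <= s -> s <= t -> t <= x n ->
            (t - s) / K <= F t - F s <= K * (t - s)).
  { induction n; intros s t Hs Hst Ht.
    - assert (s = t) by lra. subst. replace (t - t) with 0 by ring.
      unfold Rdiv; rewrite Rmult_0_l, Rmult_0_r. lra.
    - destruct (Rle_lt_dec t (x n)) as [Htn|Htn]; [apply IHn; auto|].
      specialize (Ha n). assert (Hpos : 0 <= t - s) by lra.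
      assert (HkK : (t - s) / K = (t - s) * / K) by reflexivity.
      destruct (Rle_lt_dec (x n) s) as [Hsn|Hsn].
      + rewrite (Hp n t) by lra. rewrite (Hp n s) by lra.
        replace (a n * t + b n - (a n * s + b n)) with (a n * (t - s)) by ring.
        split; nra.
      + assert (Hxn0 : 0 <= x n) by (apply x_nonneg; auto).
        specialize (IHn s (x n) Hs (Rlt_le _ _ Hsn) (Rle_refl _)).
        rewrite (Hp n t) by lra.
        assert (Hxn : F (x n) = a n * x n + b n) by (apply Hp; split; [lra| left; apply Hi]).
        replace (a n * t + b n - F s) with (a n * (t - x n) + (F (x n) - F s)) by (rewrite Hxn; ring).
        assert (E1 : (t - s) / K = (t - x n) * / K + (x n - s) / K) by (unfold Rdiv; ring).
        rewrite E1.
        split; nra. }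
  intros s t Hs Hst. destruct (Hu t) as [n Hn'].
  apply (Hn n); auto; lra.
Qed.

Lemma Rdiv_le_0_compat a b : 0 <= a -> 0 < b -> 0 <= a / b.
Proof. intros. unfold Rdiv. apply Rmult_le_pos; auto. left; apply Rinv_0_lt_compat; auto. Qed.

Lemma piece_exists (x : nat -> R) : (forall n, x n < x (S n)) ->
  (forall M, exists n, M < x n) -> forall t, x 0%nat <= t -> exists n, x n <= t < x (S n).
Proof.
  intros Hi Hu t Ht. destruct (Hu t) as [m Hm].
  induction m.
  - lra.
  - destruct (Rlt_le_dec t (x m)) as [H|H]; [apply IHm; auto| exists m; split; auto].
Qed.

Lemma piece_unique (x : nat -> R) : (forall n, x n < x (S n)) ->
  forall n m t, x n <= t < x (S n) -> x m <= t < x (S m) -> n = m.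
Proof.
  intros Hi n m t Hn Hm. destruct (Nat.lt_total n m) as [H|[H|H]]; auto.
  - assert (x (S n) <= x m) by (apply x_le; auto). lra.
  - assert (x (S m) <= x n) by (apply x_le; auto). lra.
Qed.

Definition idx (X : nat -> R) (t : R) : nat :=
  epsilon (inhabits 0%nat) (fun n => X n <= t < X (S n)).

Definition plf (X A B : nat -> R) (t : R) : R := A (idx X t) * t + B (idx X t).

Lemma idx_spec X : (forall n, X n < X (S n)) -> forall n t, X n <= t < X (S n) -> idx X t = n.
Proof.
  intros Hi n t H. unfold idx.
  pose proof (epsilon_spec (inhabits 0%nat) (fun n => X n <= t < X (S n)) (ex_intro _ n H)) as Hs.
  symmetry. eapply piece_unique; [exact Hi| exact H| exact Hs].
Qed.

Lemma plf_piece X A B : (forall n, X n < X (S n)) ->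
  (forall n, A n * X (S n) + B n = A (S n) * X (S n) + B (S n)) ->
  forall n t, X n <= t <= X (S n) -> plf X A B t = A n * t + B n.
Proof.
  intros Hi Hc n t [H1 H2]. unfold plf. destruct H2 as [H2|H2].
  - rewrite (idx_spec X Hi n t); auto.
  - subst t. rewrite (idx_spec X Hi (S n)); [| split; [lra| apply Hi]].
    rewrite Hc; auto.
Qed.

Lemma bilip_inj F x a b K : PLdata F x a b -> 0 < K -> (forall n, / K < a n < K) ->
  forall s t, 0 <= s -> 0 <= t -> F s = F t -> s = t.
Proof.
  intros HP HK Ha s t Hs Ht HF.
  assert (HKi : 0 < / K) by (apply Rinv_0_lt_compat; auto).
  destruct (Rle_lt_dec s t) as [H|H].
  - pose proof (bilip F x a b K HP HK Ha s t Hs H) as [B1 _].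
    unfold Rdiv in B1. rewrite HF in B1. nra.
  - pose proof (bilip F x a b K HP HK Ha t s Ht (Rlt_le _ _ H)) as [B1 _].
    unfold Rdiv in B1. rewrite HF in B1. nra.
Qed.

Lemma abs_bound F x a b K : PLdata F x a b -> 0 < K -> (forall n, / K < a n < K) ->
  forall s t, 0 <= s -> 0 <= t ->
  Rabs (t - s) / K <= Rabs (F t - F s) <= K * Rabs (t - s).
Proof.
  intros HP HK Ha s t Hs Ht.
  destruct (Rle_lt_dec s t) as [H|H].
  - pose proof (bilip F x a b K HP HK Ha s t Hs H) as B.
    rewrite !Rabs_right; try lra.
    assert (0 <= (t - s) / K) by (apply Rdiv_le_0_compat; lra). lra.
  - pose proof (bilip F x a b K HP HK Ha t s Ht (Rlt_le _ _ H)) as B.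
    rewrite (Rabs_minus_sym t s), (Rabs_minus_sym (F t) (F s)).
    rewrite !Rabs_right; try lra.
    assert (0 <= (s - t) / K) by (apply Rdiv_le_0_compat; lra). lra.
Qed.

Lemma PL_homeo F x a b K : PLdata F x a b -> 0 < K -> (forall n, / K < a n < K) ->
  F 0 = 0 -> homeo_halfline F.
Proof.
  intros HP HK Ha HF0.
  pose proof HP as [H0 [Hi [Hu Hp]]].
  assert (HKi : 0 < / K) by (apply Rinv_0_lt_compat; auto).
  assert (Hnn : forall t, 0 <= t -> 0 <= F t).
  { intros t Ht. pose proof (bilip F x a b K HP HK Ha 0 t (Rle_refl _) Ht) as [B _].
    rewrite HF0 in B. assert (0 <= (t - 0) / K) by (apply Rdiv_le_0_compat; lra). lra. }
  assert (Hsurj : forall y, 0 <= y -> exists t, 0 <= t /\ F t = y).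
  { intros y Hy. destruct (Hu (K * y)) as [m Hm].
    assert (Hxm : 0 <= x m) by (apply x_nonneg; auto).
    pose proof (bilip F x a b K HP HK Ha 0 (x m) (Rle_refl _) Hxm) as [B _].
    rewrite HF0 in B.
    assert (Hym : y < F (x m)).
    { assert (y = (K * y) / K) by (field; lra).
      assert ((K*y)/K < (x m - 0)/K) by (apply Rmult_lt_compat_r; lra). lra. }
    assert (Hex : exists n, F (x n) <= y < F (x (S n))).
    { clear Hxm B Hm. induction m.
      - rewrite H0, HF0 in Hym. lra.
      - destruct (Rlt_le_dec y (F (x m))) as [H|H]; [apply IHm; auto|].
        exists m; split; auto. }
    destruct Hex as [n [Hn1 Hn2]].
    assert (E1 : F (x n) = a n * x n + b n) by (apply Hp; split; [lra| left; apply Hi]).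
    assert (E2 : F (x (S n)) = a n * x (S n) + b n) by (apply Hp; split; [left; apply Hi| lra]).
    specialize (Ha n). assert (Han : 0 < a n) by lra.
    exists (x n + (y - F (x n)) / a n).
    assert (Hq : 0 <= (y - F (x n)) / a n) by (apply Rdiv_le_0_compat; lra).
    assert (Hq2 : (y - F (x n)) / a n < x (S n) - x n).
    { apply (Rmult_lt_reg_r (a n)); auto. unfold Rdiv. rewrite Rmult_assoc, Rinv_l by lra. nra. }
    assert (0 <= x n) by (apply x_nonneg; auto).
    split; [lra|]. rewrite (Hp n) by lra. rewrite E1. field. lra. }
  split; [exact Hnn|]. split.
  - intros t Ht eps He. exists (eps / K). split; [apply Rdiv_lt_0_compat; auto|].
    intros y Hy Hd. pose proof (abs_bound F x a b K HP HK Ha t y Ht Hy) as [_ B].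
    assert (K * Rabs (y - t) < K * (eps / K)) by (apply Rmult_lt_compat_l; auto).
    replace (K * (eps / K)) with eps in * by (field; lra). lra.
  - set (h := fun y => epsilon (inhabits 0) (fun t => 0 <= t /\ F t = y)).
    assert (Hh : forall y, 0 <= y -> 0 <= h y /\ F (h y) = y).
    { intros y Hy. unfold h. apply (epsilon_spec (inhabits 0) (fun t => 0 <= t /\ F t = y)).
      apply Hsurj; auto. }
    exists h. split; [split; [|split]|].
    + intros y Hy; apply Hh; auto.
    + intros t Ht. apply (bilip_inj F x a b K HP HK Ha); auto. apply Hh; auto.
      apply Hh; auto.
    + intros y Hy; apply Hh; auto.
    + intros y Hy eps He. exists (eps / K). split; [apply Rdiv_lt_0_compat; auto|].
      intros y' Hy' Hd. destruct (Hh y Hy) as [A1 A2]. destruct (Hh y' Hy') as [A3 A4].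
      pose proof (abs_bound F x a b K HP HK Ha (h y) (h y') A1 A3) as [B _].
      rewrite A2, A4 in B.
      assert (Rabs (h y' - h y) / K < eps / K) by lra.
      unfold Rdiv in H. apply Rmult_lt_reg_r in H; auto.
Qed.

Lemma build_G X A B K : X 0%nat = 0 -> (forall n, X n < X (S n)) ->
  (forall M, exists n, M < X n) ->
  (forall n, A n * X (S n) + B n = A (S n) * X (S n) + B (S n)) ->
  B 0%nat = 0 -> 1 < K -> (forall n, / K < A n < K) -> in_G (plf X A B).
Proof.
  intros H0 Hi Hu Hc HB HK Ha.
  assert (HP : PLdata (plf X A B) X A B).
  { repeat split; auto. intros n t Ht. apply plf_piece; auto. }
  split.
  - apply (PL_homeo _ X A B K HP); try lra; auto.
    rewrite (plf_piece X A B Hi Hc 0%nat 0); [rewrite HB; ring|].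
    rewrite H0. split; [lra|]. left. rewrite <- H0. apply Hi.
  - exists X, A, B. split; auto. split; auto. split; auto. split.
    + intros n t Ht; apply plf_piece; auto.
    + exists K; split; auto. intros n. specialize (Ha n).
      assert (0 < / K) by (apply Rinv_0_lt_compat; lra).
      rewrite Rabs_right by lra. auto.
Qed.

Lemma g_bounds g : in_G g -> exists K, 1 < K /\ 0 <= g 0 /\
  forall t, 0 <= t -> g 0 + t / K <= g t <= g 0 + K * t.
Proof.
  intros [[Hnn [_ [h [[_ [Hhg _]] _]]]] [x [a [b [H0 [Hi [Hu [Hp [K [HK Ha]]]]]]]]]].
  assert (HKi : 0 < / K) by (apply Rinv_0_lt_compat; lra).
  assert (Hinj : forall u v, 0 <= u -> 0 <= v -> g u = g v -> u = v).
  { intros u v Hu' Hv' E. rewrite <- (Hhg u Hu'), <- (Hhg v Hv'), E. auto. }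
  assert (Hxnn : forall n, 0 <= x n) by (apply x_nonneg; auto).
  assert (Hnz : forall n, a n <> 0).
  { intros n E. specialize (Ha n). rewrite E, Rabs_R0 in Ha. lra. }
  assert (Hturn : forall n, 0 < a n * a (S n)).
  { intros n. destruct (Rlt_le_dec 0 (a n * a (S n))) as [H|H]; auto. exfalso.
    set (p := x (S n)). set (d1 := p - x n). set (d2 := x (S (S n)) - p).
    assert (Hd1 : 0 < d1) by (unfold d1, p; specialize (Hi n); lra).
    assert (Hd2 : 0 < d2) by (unfold d2, p; specialize (Hi (S n)); lra).
    assert (Ep1 : g p = a n * p + b n) by (apply Hp; unfold p; split; [left; apply Hi| lra]).
    assert (Ep2 : g p = a (S n) * p + b (S n)) by (apply Hp; unfold p; split; [lra| left; apply Hi]).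
    assert (Han := Hnz n). assert (Han' := Hnz (S n)).
    set (dl := Rmin (Rabs (a n) * d1) (Rabs (a (S n)) * d2)).
    assert (Hdl1 : dl <= Rabs (a n) * d1) by apply Rmin_l.
    assert (Hdl2 : dl <= Rabs (a (S n)) * d2) by apply Rmin_r.
    assert (Hdl : 0 < dl).
    { unfold dl. apply Rmin_glb_lt; apply Rmult_lt_0_compat; auto; apply Rabs_pos_lt; auto. }
    set (s := dl / Rabs (a n)). set (t := dl / Rabs (a (S n))).
    assert (Has := Rabs_pos_lt _ Han). assert (Has' := Rabs_pos_lt _ Han').
    assert (Hs : 0 < s) by (apply Rdiv_lt_0_compat; auto).
    assert (Ht : 0 < t) by (apply Rdiv_lt_0_compat; auto).
    assert (Hs1 : s <= d1).
    { unfold s. apply (Rmult_le_reg_r (Rabs (a n))); auto. unfold Rdiv.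
      rewrite Rmult_assoc, Rinv_l by lra. lra. }
    assert (Ht1 : t <= d2).
    { unfold t. apply (Rmult_le_reg_r (Rabs (a (S n)))); auto. unfold Rdiv.
      rewrite Rmult_assoc, Rinv_l by lra. lra. }
    assert (Eps : Rabs (a n) * s = dl) by (unfold s; field; lra).
    assert (Ept : Rabs (a (S n)) * t = dl) by (unfold t; field; lra).
    assert (G1 : g (p - s) = a n * (p - s) + b n) by (apply (Hp n); unfold d1, p in *; split; lra).
    assert (G2 : g (p + t) = a (S n) * (p + t) + b (S n)) by (apply (Hp (S n)); unfold d2, p in *; split; lra).
    assert (Hx0 : 0 <= x n) by auto.
    assert (E : p - s = p + t).
    { apply Hinj; try (unfold d1 in *; lra).
      rewrite G1, G2.
      destruct (Rlt_le_dec 0 (a n)) as [P|P].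
      - assert (a (S n) < 0) by (destruct (Rlt_le_dec (a (S n)) 0); auto; exfalso;
          assert (a (S n) <> 0) by auto; nra).
        rewrite Rabs_right in Eps by lra. rewrite Rabs_left in Ept by lra. nra.
      - assert (a n < 0) by (destruct P; auto; exfalso; auto).
        assert (0 < a (S n)) by (destruct (Rlt_le_dec 0 (a (S n))); auto; exfalso;
          assert (a (S n) <> 0) by auto; nra).
        rewrite Rabs_left in Eps by lra. rewrite Rabs_right in Ept by lra. nra. }
    lra. }
  assert (Hsame : forall n, 0 < a 0%nat * a n).
  { induction n.
    - assert (H := Hnz 0%nat). nra.
    - specialize (Hturn n). assert (Hn := Hnz n).
      assert (0 < (a 0%nat * a n) * (a n * a (S n))) by (apply Rmult_lt_0_compat; auto).
      assert (0 < a n * a n) by nra.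
      destruct (Rlt_le_dec 0 (a 0%nat * a (S n))); auto. exfalso. nra. }
  assert (Hnode : forall n, g (x (S n)) = g (x n) + a n * (x (S n) - x n)).
  { intros n. rewrite (Hp n (x (S n))) by (split; [left; apply Hi| lra]).
    rewrite (Hp n (x n)) by (split; [lra| left; apply Hi]). ring. }
  assert (Hpos : 0 < a 0%nat).
  { destruct (Rlt_le_dec 0 (a 0%nat)) as [P|P]; auto. exfalso.
    assert (Hneg : forall n, a n < - / K).
    { intros n. assert (a n < 0) by (specialize (Hsame n); assert (H := Hnz 0%nat);
        destruct P; [nra| contradiction]).
      specialize (Ha n). rewrite Rabs_left in Ha by lra. lra. }
    assert (Hdec : forall n, g (x n) <= g 0 - x n * / K).
    { induction n; [rewrite H0; lra|]. rewrite Hnode.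
      specialize (Hneg n). specialize (Hi n). nra. }
    destruct (Hu (K * g 0)) as [n Hn].
    specialize (Hdec n). specialize (Hnn (x n) (Hxnn n)).
    assert (x n * / K > g 0).
    { apply (Rmult_lt_reg_r K); [lra|]. rewrite Rmult_assoc, Rinv_l by lra. lra. }
    lra. }
  assert (Hap : forall n, / K < a n < K).
  { intros n. specialize (Hsame n). specialize (Ha n).
    assert (0 < a n) by nra. rewrite Rabs_right in Ha by lra. auto. }
  exists K. split; auto. split; [apply Hnn; lra|].
  intros t Ht.
  assert (HP : PLdata g x a b) by (repeat split; auto).
  pose proof (bilip g x a b K HP ltac:(lra) Hap 0 t (Rle_refl _) Ht) as B.
  replace (t - 0) with t in B by ring. lra.
Qed.

Fixpoint dec (k : nat) : nat * nat :=
  match k with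
  | O => (O, O)
  | S k' => let (n, j) := dec k' in if Nat.eqb j 4 then (S n, O) else (n, S j)
  end.

Lemma dec_inv k : k = (5 * fst (dec k) + snd (dec k))%nat /\ (snd (dec k) < 5)%nat.
Proof.
  induction k; simpl; [lia|]. destruct (dec k) as [n j]. simpl in *.
  destruct (Nat.eqb_spec j 4); simpl; lia.
Qed.

Lemma dec_5 n j : (j < 5)%nat -> dec (5 * n + j) = (n, j).
Proof.
  intros Hj. destruct (dec_inv (5 * n + j)) as [H1 H2].
  destruct (dec (5 * n + j)) as [n' j']. simpl in *. f_equal; lia.
Qed.

Definition Pt (z : nat -> R) (L : R) (n j : nat) : R :=
  match j with
  | O => match n with O => 0 | S m => (3 * L - 2) * z m end
  | 1%nat => z n / (L * L)
  | 2%nat => z n / L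
  | 3%nat => z n
  | _ => L * z n
  end.
Definition Sl (L : R) (j : nat) : R :=
  match j with
  | O => 1 | 1%nat => 2 | 2%nat => 1 - / L | 3%nat => 2 | _ => / 2 end.
Definition Ic (z : nat -> R) (L : R) (n j : nat) : R :=
  match j with
  | O => 0
  | 1%nat => - (z n / (L * L))
  | 2%nat => z n / L
  | 3%nat => - z n
  | _ => (3 * L / 2 - 1) * z n
  end.

Definition BX z L k := Pt z L (fst (dec k)) (snd (dec k)).
Definition BA L k := Sl L (snd (dec k)).
Definition BB z L k := Ic z L (fst (dec k)) (snd (dec k)).

Lemma dec_S k n j : dec k = (n, j) ->
  dec (S k) = if Nat.eqb j 4 then (S n, O) else (n, S j).
Proof. intros E. simpl. rewrite E. reflexivity. Qed.


Lemma bump_props (z : nat -> R) (L : R) :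
  2 < L -> (forall n, 0 < z n) -> (forall n, L * L * (3 * L - 2) * z n < z (S n)) ->
  (forall n, INR n < z n) ->
  in_G (plf (BX z L) (BA L) (BB z L)) /\
  (forall n, plf (BX z L) (BA L) (BB z L) (z n) = z n) /\
  (forall n t, z n / L <= t <= z n -> plf (BX z L) (BA L) (BB z L) t = (1 - / L) * t + z n / L) /\
  (forall n t, z n <= t <= L * z n -> plf (BX z L) (BA L) (BB z L) t = 2 * t - z n).
Proof.
  intros HL Hz Hzs Hzu.
  assert (HL0 : 0 < L) by lra.
  assert (HLi : 0 < / L) by (apply Rinv_0_lt_compat; lra).
  assert (HLi2 : / L < / 2) by (apply Rinv_lt_contravar; lra).
  assert (Hi : forall k, BX z L k < BX z L (S k)).
  { intros k. destruct (dec_inv k) as [_ Hj]. destruct (dec k) as [n j] eqn:E.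
    unfold BX. rewrite (dec_S k n j E), E. simpl in Hj |- *.
    destruct j as [|[|[|[|[|j]]]]]; simpl; try lia.
    - destruct n.
      + specialize (Hz 0%nat). apply Rdiv_lt_0_compat; nra.
      + specialize (Hzs n). pose proof (Hz n).
        apply (Rmult_lt_reg_r (L * L)); [nra|].
        replace (z (S n) / (L * L) * (L * L)) with (z (S n)) by (field; lra). nra.
    - specialize (Hz n). unfold Rdiv.
      rewrite Rinv_mult. assert (/L * /L < /L) by nra. nra.
    - specialize (Hz n). unfold Rdiv. nra.
    - specialize (Hz n). nra.
    - specialize (Hz n). nra. }
  assert (Hc : forall k, BA L k * BX z L (S k) + BB z L k = BA L (S k) * BX z L (S k) + BB z L (S k)).
  { intros k. destruct (dec_inv k) as [_ Hj]. destruct (dec k) as [n j] eqn:E.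
    unfold BX, BA, BB. rewrite (dec_S k n j E), E. simpl in Hj |- *.
    destruct j as [|[|[|[|[|j]]]]]; simpl; try lia; field; lra. }
  assert (HX : forall n j, (j < 5)%nat -> BX z L (5 * n + j) = Pt z L n j).
  { intros n j Hj. unfold BX. rewrite dec_5; auto. }
  assert (HA : forall n j, (j < 5)%nat -> BA L (5 * n + j) = Sl L j).
  { intros n j Hj. unfold BA. rewrite dec_5; auto. }
  assert (HB : forall n j, (j < 5)%nat -> BB z L (5 * n + j) = Ic z L n j).
  { intros n j Hj. unfold BB. rewrite dec_5; auto. }
  assert (Hpc : forall n j t, (j < 4)%nat -> Pt z L n j <= t <= Pt z L n (S j) ->
     plf (BX z L) (BA L) (BB z L) t = Sl L j * t + Ic z L n j).
  { intros n j t Hj Ht. rewrite (plf_piece _ _ _ Hi Hc (5 * n + j)).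
    - rewrite HA, HB by lia. auto.
    - rewrite HX by lia. replace (S (5 * n + j)) with (5 * n + S j)%nat by lia.
      rewrite HX by lia. auto. }
  split; [|split; [|split]].
  - apply (build_G _ _ _ 3).
    + reflexivity.
    + exact Hi.
    + intros M. destruct (INR_unbounded M) as [n Hn]. exists (5 * n + 3)%nat.
      rewrite HX by lia. simpl. specialize (Hzu n). lra.
    + exact Hc.
    + unfold BB. simpl. reflexivity.
    + lra.
    + intros k. unfold BA. destruct (dec_inv k) as [_ Hj].
      destruct (snd (dec k)) as [|[|[|[|[|j]]]]]; simpl; try lia;
        assert (/ 3 < / 2) by (apply Rinv_lt_contravar; lra);
        assert (0 < / 3) by (apply Rinv_0_lt_compat; lra); try lra.
  - intros n. rewrite (Hpc n 3%nat (z n)) by (simpl; try lia; specialize (Hz n); nra).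
    simpl. ring.
  - intros n t Ht. rewrite (Hpc n 2%nat t) by (simpl; try lia; lra). simpl. auto.
  - intros n t Ht. rewrite (Hpc n 3%nat t) by (simpl; try lia; lra). simpl. ring.
Qed.

Fixpoint zseq (sel : R -> R) (T C : R) (n : nat) : R :=
  match n with
  | O => sel (Rmax T 1)
  | S m => sel (Rmax T (C * zseq sel T C m + INR m + 2))
  end.

Theorem theorem3 :
  forall g : R -> R, in_G g ->
    (forall f : R -> R, in_G f ->
       forall finv ginv : R -> R, inv_on f finv -> inv_on g ginv ->
         in_H (fun x => f (g (finv (ginv x))))) ->
    in_H g.
Proof.
  intros g HG Hcomm. split; [exact HG|].
  destruct (g_bounds g HG) as [Kg [HKg [Hg0 Hgb]]].
  apply NNPP; intro Hnot. unfold ratio_tends_to_1 in Hnot.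
  apply not_all_ex_not in Hnot as [eps Heps]. apply imply_to_and in Heps as [Heps HnM].
  assert (Hbad : forall M, exists x, M <= x /\ 0 < x /\ eps <= Rabs (g x / x - 1)).
  { intros M. pose proof (not_ex_all_not _ _ HnM M) as H.
    apply not_all_ex_not in H as [x Hx]. apply imply_to_and in Hx as [H1 Hx].
    apply imply_to_and in Hx as [H2 Hx]. exists x; repeat split; auto.
    apply Rnot_lt_le; auto. }
  set (L := 2 * Kg).
  set (T := g 0 / Kg + 1).
  set (sel := fun M => proj1_sig (constructive_indefinite_description _ (Hbad M))).
  assert (Hsel : forall M, M <= sel M /\ 0 < sel M /\ eps <= Rabs (g (sel M) / sel M - 1)).
  { intros M. unfold sel. apply (proj2_sig (constructive_indefinite_description _ (Hbad M))). }
  set (C := L * L * (3 * L - 2)).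
  assert (HL : 2 < L) by (unfold L; lra).
  assert (HC : 0 < C) by (unfold C; assert (0 < L * L) by nra; nra).
  set (z := zseq sel T C).
  assert (HzT : forall n, T <= z n).
  { intros [|n]; unfold z; simpl; eapply Rle_trans; [| apply Hsel| | apply Hsel]; apply Rmax_l. }
  assert (Hz : forall n, 0 < z n).
  { intros [|n]; unfold z; simpl; apply Hsel. }
  assert (Hzs : forall n, C * z n < z (S n)).
  { intros n. change (z (S n)) with (sel (Rmax T (C * z n + INR n + 2))).
    eapply Rlt_le_trans; [| apply Hsel]. eapply Rlt_le_trans; [| apply Rmax_r].
    pose proof (pos_INR n). lra. }
  assert (Hzu : forall n, INR n < z n).
  { intros [|n].
    - simpl. change (z 0%nat) with (sel (Rmax T 1)).
      eapply Rlt_le_trans; [| apply Hsel]. eapply Rlt_le_trans; [| apply Rmax_r]. lra.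
    - change (z (S n)) with (sel (Rmax T (C * z n + INR n + 2))).
      eapply Rlt_le_trans; [| apply Hsel]. eapply Rlt_le_trans; [| apply Rmax_r].
      rewrite S_INR. specialize (Hz n). nra. }
  assert (Hbz : forall n, eps <= Rabs (g (z n) / z n - 1)).
  { intros [|n]; unfold z; simpl; apply Hsel. }
  destruct (bump_props z L HL Hz Hzs Hzu) as [Hf [Hfz [Hf2 Hf3]]].
  set (f := plf (BX z L) (BA L) (BB z L)) in *.
  assert (Hf' := Hf). destruct Hf' as [[_ [_ [finv [Hfi _]]]] _].
  assert (HG' := HG). destruct HG' as [[_ [_ [ginv [Hgi _]]]] _].
  destruct (Hcomm f Hf finv ginv Hfi Hgi) as [_ Hr].
  assert (HLe : 0 < eps / L) by (apply Rdiv_lt_0_compat; lra).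
  destruct (Hr (eps / L) HLe) as [M HM].
  destruct (INR_unbounded (M * L)) as [n Hn].
  set (zn := z n). set (w := g zn).
  assert (Hzn : 0 < zn) by apply Hz.
  assert (HznM : M * L < zn) by (specialize (Hzu n); unfold zn; lra).
  assert (HznT : T <= zn) by apply HzT.
  assert (HKg0 : 0 < Kg) by lra.
  destruct (Hgb zn (Rlt_le _ _ Hzn)) as [Gl Gu].
  fold w in Gl, Gu.
  assert (Hg0K : g 0 <= Kg * zn).
  { unfold T in HznT. assert (g 0 = Kg * (g 0 / Kg)) by (field; lra). nra. }
  assert (Hwu : w <= L * zn) by (unfold L; lra).
  assert (Hzk : zn / L <= zn / Kg).
  { unfold Rdiv. apply Rmult_le_compat_l; [lra|]. apply Rinv_le_contravar; unfold L; lra. }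
  assert (Hzk0 : 0 <= zn / Kg) by (apply Rdiv_le_0_compat; lra).
  assert (Hwl : zn / L <= w) by lra.
  assert (HwM : M <= w).
  { assert (M < zn / L).
    { apply (Rmult_lt_reg_r L); [lra|]. replace (zn / L * L) with zn by (field; lra). lra. }
    lra. }
  assert (Hw0 : 0 < w).
  { assert (0 < zn / L) by (apply Rdiv_lt_0_compat; lra). lra. }
  specialize (HM w HwM Hw0).
  assert (Ec : f (g (finv (ginv w))) = f w).
  { destruct Hgi as [_ [Hgi2 _]]. replace (ginv w) with zn by (symmetry; apply Hgi2; lra).
    destruct Hfi as [_ [Hfi2 _]]. pose proof (Hfi2 zn (Rlt_le _ _ Hzn)) as E.
    unfold zn in E. rewrite Hfz in E. fold zn in E. rewrite E. reflexivity. }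
  rewrite Ec in HM.
  specialize (Hbz n). fold zn w in Hbz.
  destruct (Rle_lt_dec w zn) as [Hle|Hlt].
  - rewrite (Hf2 n w) in HM by (fold zn; lra). fold zn in HM.
    rewrite Rabs_left1 in Hbz.
    2: { assert (w / zn <= 1). { apply (Rmult_le_reg_r zn); auto.
         replace (w / zn * zn) with w by (field; lra). lra. } lra. }
    assert (E1 : eps * zn <= zn - w).
    { assert (- (w / zn - 1) * zn = zn - w) by (field; lra). nra. }
    assert (E2 : ((1 - / L) * w + zn / L) / w - 1 = (zn - w) / (L * w)) by (field; lra).
    rewrite E2 in HM.
    assert (E3 : eps / L <= (zn - w) / (L * w)).
    { assert (eps / L = (eps * w) / (L * w)) by (field; lra). rewrite H.
      unfold Rdiv. apply Rmult_le_compat_r.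
      - left; apply Rinv_0_lt_compat; nra.
      - nra. }
    rewrite Rabs_right in HM; [lra|]. assert (0 < eps / L) by auto. lra.
  - rewrite (Hf3 n w) in HM by (fold zn; lra). fold zn in HM.
    rewrite Rabs_right in Hbz.
    2: { assert (1 <= w / zn). { apply (Rmult_le_reg_r zn); auto.
         replace (w / zn * zn) with w by (field; lra). lra. } lra. }
    assert (E1 : eps * zn <= w - zn).
    { assert ((w / zn - 1) * zn = w - zn) by (field; lra). nra. }
    assert (E2 : (2 * w - zn) / w - 1 = (w - zn) / w) by (field; lra).
    rewrite E2 in HM.
    assert (E3 : eps / L <= (w - zn) / w).
    { assert (eps / L = (eps * w) / (L * w)) by (field; lra). rewrite H.
      assert ((w - zn) / w = ((w - zn) * L) / (L * w)) by (field; lra). rewrite H0.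
      unfold Rdiv. apply Rmult_le_compat_r.
      - left; apply Rinv_0_lt_compat; nra.
      - nra. }
    rewrite Rabs_right in HM; [lra|]. lra.
Qed.
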